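(* For every real $\varepsilon>0$ there exist a positive integer $j$ and a vector $\mathbf{y}\in\mathbb{R}^j$ with $\mathbf{y}\ge \mathbf{0}$ (componentwise) such that $M_{j,\varepsilon}^T\mathbf{y}\ge \mathbf{0}$ and $\mathbf{b}'^T_{j,\varepsilon}\mathbf{y}<0$.
   Context: For a positive integer $j$ and real $\varepsilon$, $M_{j,\varepsilon}$ is the $j\times j$ lower triangular matrix with entries $m_{a,b}=1$ if $a=b$, $m_{a,b}=-(3-\varepsilon)$ if $a=b+1$, $m_{a,b}=1$ if $a\ge b+2$, and $m_{a,b}=0$ if $a<b$. The vector $\mathbf{b}'_{j,\varepsilon}\in\mathbb{R}^j$ has coordinates $b'_1=7-2\varepsilon$ and $b'_i=12-i-3\varepsilon$ for $2\le i\le j$ (equivalently, $\mathbf{b}'_{j,\varepsilon}=(8-2\varepsilon)\mathbf{1}-M_{j,\varepsilon}\mathbf{1}$, where $\mathbf{1}$ is the all-ones vector). *)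

(* Defs.v *)
From mathcomp Require Import all_boot all_order all_algebra.
From mathcomp Require Import reals.
Set Implicit Arguments. Unset Strict Implicit. Unset Printing Implicit Defensive.
Import Order.TTheory GRing.Theory Num.Theory.
Local Open Scope ring_scope.

(* Indices are 0-based ordinals 'I_j; the paper's 1-based index a corresponds to i+1. *)
Definition Mmat (R : realType) (j : nat) (eps : R) : 'M[R]_j :=
  \matrix_(a < j, b < j)
    (if (a == b :> nat) then 1
     else if (a == b.+1 :> nat) then - (3 - eps)
     else if (b.+2 <= a)%N then 1
     else 0).

Definition bvec (R : realType) (j : nat) (eps : R) : 'cV[R]_j :=
  \col_(a < j)
    (if (a == 0 :> nat) then 7 - 2 * eps
     else 12 - (a.+1)%:R - 3 * eps).

(* Main.v *)
Require Import Defs.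
From mathcomp Require Import all_boot all_order all_algebra.
From mathcomp Require Import reals.
From mathcomp Require Import zify ring lra.
Import Order.TTheory GRing.Theory Num.Theory.
Local Open Scope ring_scope.
From Stdlib Require Import Classical.
Section Seq.
Variable R : realType.
Variable c : R.

Fixpoint up (k : nat) : R * R :=
  match k with 0 => (1, c) | k'.+1 => let p := up k' in (p.2, (1 + c) * (p.2 - p.1)) end.
Definition u k := (up k).1.

Lemma u0 : u 0 = 1. Proof. by []. Qed.
Lemma u1 : u 1 = c. Proof. by []. Qed.
Lemma uS k : u k.+2 = (1 + c) * (u k.+1 - u k).
Proof. by []. Qed.

Lemma usum k : u k.+1 = c * u k - \sum_(i < k) u i.
Proof.
elim: k => [|k IH]; first by rewrite big_ord0 u1 u0; ring.
rewrite uS big_ord_recr /= IH; ring.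
Qed.

Lemma uneg : c < 3 -> exists n, u n < 0.
Proof.
move=> c3.
have [c0|c0] := leP c 0.
  have [cn|cz] := ltP c 0; first by exists 1%N; rewrite u1.
  have hc : c = 0 by apply/le_anti; rewrite c0 cz.
  by exists 2%N; rewrite uS u1 u0 hc; lra.
apply: NNPP => H.
have nn : forall n, 0 <= u n.
  move=> n; rewrite leNgt; apply/negP => hn; apply: H; by exists n.
set s := 1 + c.
set d := s * (4 - s) / 4.
set e := d / c.
have ec : e * c = d by rewrite /e mulfVK //; lra.
have d0 : 0 < d by rewrite /d; apply: divr_gt0; [apply: mulr_gt0; rewrite /s; lra|lra].
have e0 : 0 < e by rewrite /e divr_gt0.
have mono : forall k, u k <= u k.+1.
  move=> k; have := nn k.+2; rewrite uS => h.
  have : 0 <= u k.+1 - u k by rewrite -(pmulr_rge0 _ (_ : 0 < 1 + c)) //; lra.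
  lra.
have pos : forall k, 1 <= u k.
  elim=> [|k IH]; first by rewrite u0.
  by apply: le_trans IH (mono k).
have claim : forall k, u k.+1 <= (c - k%:R * e) * u k.
  elim=> [|k IH]; first by rewrite u1 u0; lra.
  rewrite uS -/s.
  set a := u k in IH *; set b := u k.+1 in IH *; set t := c - k%:R * e in IH *.
  have ha : 1 <= a by apply: pos.
  have hab : a <= b by apply: mono.
  have kt : 0 <= k%:R * e by apply: mulr_ge0; [apply: ler0n| lra].
  have bc : b <= c * a.
    apply: le_trans IH _; apply: ler_wpM2r; rewrite /t; lra.
  have h1 : b * b <= t * a * b by apply: ler_wpM2r; lra.
  have h2 : e * b * a <= d * a * a.
    have ea : 0 <= e * a by apply: mulr_ge0; lra.
    have cab : 0 <= c * a - b by lra.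
    have h := mulr_ge0 cab ea.
    rewrite -ec; nra.
  have h3 : 0 <= (b - s * a / 2) ^+ 2 by apply: sqr_ge0.
  have hd : d = s * (4 - s) / 4 by [].
  rewrite -addn1 natrD.
  suff : a * (s * (b - a)) <= a * ((c - (k%:R + 1) * e) * b).
    by rewrite ler_pM2l //; lra.
  have : a * ((c - (k%:R + 1) * e) * b) = t * a * b - e * b * a.
    rewrite /t; ring.
  move=> ->.
  have : a * (s * (b - a)) = b * b - (b - s * a / 2) ^+ 2 - (s - s * s / 4) * a * a.
    by field.
  move=> ->.
  have : d = s - s * s / 4 by rewrite hd; field.
  move=> hd'. rewrite -hd'. lra.
have tk : forall k, 1 <= c - k%:R * e.
  move=> k; have h := claim k; have hm := mono k; have hp := pos k.
  rewrite -(ler_pM2r (_ : 0 < u k)); last lra.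
  rewrite mul1r; exact: le_trans hm h.
have hb := @archi_boundP _ (c / e) (ltW (divr_gt0 (c0) e0)).
set k := Num.Def.archi_bound (c / e) in hb.
have := tk k.
have : c < k%:R * e by rewrite -ltr_pdivrMr.
lra.
Qed.
End Seq.
Section S2.
Variable R : realType.
Variable c : R.
Definition G (n k : nat) : R :=
  if k == n then 1 else if k.+1 == n then - c else if (k.+2 <= n)%N then 1 else 0.
Definition Z (w : nat -> R) (n : nat) : R :=
  match n with 0 => w 0%N | p.+1 => w p.+1 - c * w p + \sum_(0 <= k < p) w k end.

Lemma sumG (w : nat -> R) n N : (n < N)%N ->
  \sum_(0 <= k < N) G n k * w k = Z w n.
Proof.
move=> nN.
rewrite (big_cat_nat _ (n := n.+1)) //=.
rewrite [X in _ + X]big1_seq ?addr0; last first.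
  move=> k /andP[_]; rewrite mem_index_iota => /andP[h1 h2].
  rewrite /G; have -> : (k == n) = false by apply/negbTE/eqP; lia.
  have -> : (k.+1 == n) = false by apply/negbTE/eqP; lia.
  have -> : (k.+2 <= n)%N = false by apply/negbTE; lia.
  by rewrite mul0r.
rewrite big_nat_recr //=. rewrite {2}/G eqxx mul1r.
case: n nN => [|p] nN; first by rewrite big_geq // add0r.
rewrite big_nat_recr //= {2}/G.
have -> : (p == p.+1) = false by apply/negbTE/eqP; lia.
rewrite eqxx /=.
rewrite (@eq_big_nat _ _ _ 0 p _ (fun k => w k)); last first.
  move=> k /andP[_ hk]; rewrite /G.
  have -> : (k == p.+1) = false by apply/negbTE/eqP; lia.
  have -> : (k.+1 == p.+1) = false by apply/negbTE/eqP; lia.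
  have -> : (k.+2 <= p.+1)%N = true by apply/idP; lia.
  by rewrite mul1r.
rewrite /Z; ring.
Qed.
End S2.

Theorem mainTheorem6 (R : realType) (eps : R) (heps : 0 < eps) :
  exists (j : nat) (y : 'cV[R]_j),
    (0 < j)%N /\
    (forall i, 0 <= y i 0) /\
    (forall i, 0 <= ((Mmat j eps)^T *m y) i 0) /\
    ((bvec j eps)^T *m y) 0 0 < 0.
Proof.
set c := 3 - eps.
have [n0 hn0] := (@uneg R c ltac:(rewrite /c; lra)).
have [n hn hmin] := ex_minnP (ex_intro (fun n => u R c n < 0) n0 hn0).
have n0' : (0 < n)%N.
  case: n hn hmin => // ; rewrite u0 => h; lra.
set m := n.-1.
have hm : u R c m.+1 < 0 by rewrite /m prednK.
have vpos : forall k, (k <= m)%N -> 0 <= u R c k.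
  move=> k km; rewrite leNgt; apply/negP => hk.
  have := hmin k hk; rewrite /m in km; lia.
set v := fun k => if (k <= m)%N then u R c k else 0.
have v0 : forall k, 0 <= v k by move=> k; rewrite /v; case: ifP => // /vpos.
exists (m + 11).+1, (\col_(a < (m + 11).+1) v (m + 11 - a)%N).
split => //.
split; first by move=> i; rewrite mxE.
split.
  move=> i; rewrite !mxE.
  under eq_bigr do rewrite !mxE.
  rewrite -(big_mkord (fun _ => true) (fun k => (if k == i then 1 else if k == i.+1 then - (3 - eps) else if (i.+1 < k)%N then 1 else 0) * v (m + 11 - k)%N)) big_nat_rev /=.
  have hi := ltn_ord i.
  rewrite (@eq_big_nat _ _ _ 0 (m + 11).+1 _ (fun k => G R c (m + 11 - i) k * v k)); last first.
    move=> k /andP[_ hk]; rewrite /G.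
    have -> : ((0 + (m + 11).+1 - k.+1)%N == i :> nat) = (k == m + 11 - i)%N.
      by apply/idP/idP => /eqP h; apply/eqP; lia.
    have -> : ((0 + (m + 11).+1 - k.+1)%N == i.+1 :> nat) = (k.+1 == m + 11 - i)%N.
      by apply/idP/idP => /eqP h; apply/eqP; lia.
    have -> : (i.+2 <= (0 + (m + 11).+1 - k.+1)%N)%N = (k.+2 <= m + 11 - i)%N.
      by apply/idP/idP => h; lia.
    have -> : (m + 11 - (0 + (m + 11).+1 - k.+1) = k)%N by lia.
    by [].
  rewrite (@sumG R c); last lia.
  case: (m + 11 - i)%N => [|p] /=; first exact: v0.
  have sp : 0 <= \sum_(0 <= k < p) v k by apply: sumr_ge0 => k _; exact: v0.
  case: (leqP p.+1 m) => hp.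
    rewrite /v hp (leq_trans (leqnSn p) hp).
    rewrite (@eq_big_nat _ _ _ 0 p _ (fun k => u R c k)); last first.
      by move=> k /andP[_ hk]; rewrite ifT //; lia.
    rewrite big_mkord usum /c; lra.
  rewrite {1}/v ifF; last lia.
  case: (leqP p m) => hpm.
    have -> : p = m by lia.
    rewrite /v leqnn.
    rewrite (@eq_big_nat _ _ _ 0 m _ (fun k => u R c k)); last first.
      by move=> k /andP[_ hk]; rewrite ifT //; lia.
    have := hm; rewrite usum big_mkord /c; lra.
  rewrite {1}/v ifF; last lia.
  lra.
rewrite !mxE (bigD1 ord_max) //= !mxE.
have -> : (m + 11 - (m + 11) = 0)%N by lia.
have -> : v 0%N = 1 by rewrite /v leq0n u0.
rewrite mulr1.
have -> : (m + 11 == 0)%N = false by lia.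
have hs : \sum_(i < (m + 11).+1 | i != ord_max) (bvec (m + 11).+1 eps)^T 0 i *
    (\col_(a < (m + 11).+1) v (m + 11 - a)%N) i 0 <= 0.
  apply: sumr_le0 => a _; rewrite !mxE.
  case: (ltnP a 11) => ha.
    have hv : v (m + 11 - a)%N = 0 by rewrite /v ifF //; lia.
    by rewrite hv mulr0.
  have a0 : (a == 0 :> nat) = false by lia.
  rewrite a0; apply: mulr_le0_ge0; last exact: v0.
  have : 12 - (a.+1)%:R <= (0:R) by rewrite subr_le0 ler_nat; lia.
  lra.
have : 12 - ((@ord_max (m + 11)) : nat).+1%:R <= (0:R) by rewrite subr_le0 ler_nat /=; lia.
lra.
Qed.
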